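(* Let $u\in C^2[0,\pi]$ with $u(x)>0$ for all $x\in[0,\pi]$, let $p,q\in\mathbb{N}^+$ with $\gcd(p,q)=1$, and let $\mu_{mn}=\lambda_n^2-\left(\frac{q}{p}m\right)^2$ for $m\in\mathbb{N}=\{0,1,2,\dots\}$, $n\in\mathbb{N}^+$, where $\lambda_1^2<\lambda_2^2<\cdots$ are the eigenvalues of the Dirichlet Sturm–Liouville problem $(u(x)\varphi'(x))'=-\lambda^2u(x)\varphi(x)$, $\varphi(0)=\varphi(\pi)=0$. Assume $p$ is even. Then, for odd $m$, the eigenvalues $\mu_{mn}$ are isolated and have finite multiplicity; that is, every element of the set $\{\mu_{mn}: m \text{ odd},\ n\in\mathbb{N}^+\}$ is an isolated point of this set and is equal to $\mu_{mn}$ for only finitely many pairs $(m,n)$ with $m$ odd, $n\in\mathbb{N}^+$.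
   Context: The $\mu_{mn}$ are the eigenvalues of the linear wave operator $L$ associated with $u(x)y_{tt}-(u(x)y_x)_x$ on $T$-periodic (with $T=2\pi p/q$) functions satisfying Dirichlet conditions at $x=0,\pi$, with eigenfunctions $\varphi_n(x)\cos\frac{q}{p}mt$, $\varphi_n(x)\sin\frac{q}{p}mt$, where $\varphi_n$ is the eigenfunction corresponding to $\lambda_n^2$. *)

(* Defs.v *)
From Stdlib Require Import Reals Lra Lia.
From Coquelicot Require Import Coquelicot.
Open Scope R_scope.


Definition C2_closed (f : R -> R) : Prop :=
  exists df ddf : R -> R,
    (forall x, 0 < x < PI -> is_derive f x (df x) /\ is_derive df x (ddf x)) /\
    (forall x, 0 <= x <= PI ->
       filterlim f (within (fun y => 0 <= y <= PI) (locally x)) (locally (f x)) /\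
       filterlim df (within (fun y => 0 <= y <= PI) (locally x)) (locally (df x)) /\
       filterlim ddf (within (fun y => 0 <= y <= PI) (locally x)) (locally (ddf x))).

(* Lam (= lambda^2) is an eigenvalue of the Dirichlet Sturm-Liouville problem
   (u phi')' = - Lam u phi on [0,pi], phi(0) = phi(pi) = 0, phi nontrivial. *)
Definition DSL_eigenvalue (u : R -> R) (Lam : R) : Prop :=
  exists phi dphi ddphi : R -> R,
    (forall x, 0 < x < PI -> is_derive phi x (dphi x) /\ is_derive dphi x (ddphi x)) /\
    (forall x, 0 <= x <= PI ->
       filterlim phi (within (fun y => 0 <= y <= PI) (locally x)) (locally (phi x)) /\
       filterlim dphi (within (fun y => 0 <= y <= PI) (locally x)) (locally (dphi x)) /\
       filterlim ddphi (within (fun y => 0 <= y <= PI) (locally x)) (locally (ddphi x))) /\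
    (forall x, 0 < x < PI ->
       is_derive (fun y => u y * dphi y) x (- Lam * u x * phi x)) /\
    phi 0 = 0 /\ phi PI = 0 /\
    (exists x, 0 <= x <= PI /\ phi x <> 0).

Definition DSL_eigen_enum (u : R -> R) (lam2 : nat -> R) : Prop :=
  (forall n, (1 <= n)%nat -> lam2 n < lam2 (S n)) /\
  (forall n, (1 <= n)%nat -> DSL_eigenvalue u (lam2 n)) /\
  (forall Lam, DSL_eigenvalue u Lam -> exists n, (1 <= n)%nat /\ lam2 n = Lam).

Definition mu (lam2 : nat -> R) (p q m n : nat) : R :=
  lam2 n - (INR q / INR p * INR m) ^ 2.

(* Main.v *)
Require Import Defs.
From Stdlib Require Import Reals Lra Lia ZArith.
From Coquelicot Require Import Coquelicot.
Open Scope R_scope.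


Definition II (y : R) : Prop := 0 <= y <= PI.
Definition WC (f : R -> R) : Prop :=
  forall x, 0 <= x <= PI -> filterlim f (within (fun y => 0 <= y <= PI) (locally x)) (locally (f x)).
Definition OD (f df : R -> R) : Prop := forall x, 0 < x < PI -> is_derive f x (df x).

Definition clamp (x : R) : R := Rmax 0 (Rmin x PI).

Lemma clamp_in x : 0 <= clamp x <= PI.
Proof. unfold clamp, Rmax, Rmin; pose proof PI_RGT_0; repeat destruct Rle_dec; lra. Qed.

Lemma clamp_id x : 0 <= x <= PI -> clamp x = x.
Proof. unfold clamp, Rmax, Rmin; intros; repeat destruct Rle_dec; lra. Qed.

Lemma clamp_lip x y : Rabs (clamp y - clamp x) <= Rabs (y - x).
Proof. unfold clamp, Rmax, Rmin; pose proof PI_RGT_0;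
  repeat destruct Rle_dec; unfold Rabs; repeat destruct Rcase_abs; lra. Qed.

Lemma clamp_lim x : filterlim clamp (locally x) (within (fun y => 0 <= y <= PI) (locally (clamp x))).
Proof.
  intros P [eps Heps]. exists eps. intros y Hy. apply Heps.
  - unfold ball in *; simpl in *; unfold AbsRing_ball in *; simpl in *.
    unfold abs, minus, plus, opp in *; simpl in *.
    eapply Rle_lt_trans; [apply clamp_lip|exact Hy].
  - apply clamp_in.
Qed.

Lemma WC_clamp f : WC f -> forall x, continuity_pt (fun y => f (clamp y)) x.
Proof.
  intros Hf x. apply continuity_pt_filterlim.
  eapply filterlim_comp; [apply clamp_lim|]. apply Hf, clamp_in.
Qed.

Lemma interior_loc x : 0 < x < PI -> locally x (fun t => 0 < t < PI).
Proof.
  intros Hx. assert (He: 0 < Rmin (x) (PI - x)) by (apply Rmin_pos; lra).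
  exists (mkposreal _ He). intros y Hy. unfold ball in Hy; simpl in Hy; unfold AbsRing_ball in Hy; simpl in Hy.
  unfold abs, minus, plus, opp in Hy; simpl in Hy.
  pose proof (Rmin_l x (PI - x)); pose proof (Rmin_r x (PI-x)).
  unfold Rabs in Hy; destruct Rcase_abs in Hy; lra.
Qed.

Lemma OD_clamp f df x : OD f df -> 0 < x < PI -> is_derive (fun y => f (clamp y)) x (df x).
Proof.
  intros Hd Hx. apply is_derive_ext_loc with f; [|apply Hd; auto].
  generalize (interior_loc x Hx). apply filter_imp. intros t Ht. rewrite clamp_id; lra.
Qed.

Lemma mvt h dh a b : 0 <= a -> a < b -> b <= PI -> OD h dh -> WC h ->
  exists c, a < c < b /\ h b - h a = dh c * (b - a).
Proof.
  intros Ha Hab Hb Hd Hc.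
  set (hc := fun y => h (clamp y)).
  assert (pr1 : forall c, a < c < b -> derivable_pt hc c).
  { intros c Pc. exists (dh c). apply is_derive_Reals. apply OD_clamp; auto; lra. }
  assert (pr2 : forall c, a < c < b -> derivable_pt id c).
  { intros c Pc. apply derivable_pt_id. }
  destruct (MVT hc id a b pr1 pr2 Hab) as [c [Pc Heq]].
  - intros; apply WC_clamp; auto.
  - intros; apply derivable_continuous_pt, derivable_pt_id.
  - exists c. split; auto.
    rewrite (derive_pt_eq_0 hc c (dh c) (pr1 c Pc)) in Heq.
    2: { apply is_derive_Reals. apply OD_clamp; auto; lra. }
    rewrite (derive_pt_eq_0 id c 1 (pr2 c Pc)) in Heq by apply derivable_pt_lim_id.
    unfold hc, id in Heq. rewrite !clamp_id in Heq by lra. lra.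
Qed.

Lemma mono_dec h dh : OD h dh -> WC h -> (forall x, 0 < x < PI -> dh x <= 0) ->
  forall x y, 0 <= x <= y -> y <= PI -> h y <= h x.
Proof.
  intros Hd Hc Hn x y Hxy Hy. destruct (Req_dec x y) as [->|Hne]; [lra|].
  destruct (mvt h dh x y) as [c [Hc1 Hc2]]; try lra; auto.
  assert (dh c <= 0) by (apply Hn; lra). nra.
Qed.

Lemma WC_comp g f : (forall x, 0 <= x <= PI -> continuity_pt g (f x)) -> WC f -> WC (fun x => g (f x)).
Proof.
  intros Hg Hf x Hx. eapply filterlim_comp; [apply Hf; auto|].
  apply (proj1 (continuity_pt_filterlim _ _)). apply Hg; auto.
Qed.

Lemma WC_plus f g : WC f -> WC g -> WC (fun x => f x + g x).
Proof.
  intros Hf Hg x Hx. eapply filterlim_comp_2; [apply Hf; auto|apply Hg; auto|].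
  apply (filterlim_plus (K := R_AbsRing) (V := R_NormedModule)).
Qed.

Lemma WC_mult f g : WC f -> WC g -> WC (fun x => f x * g x).
Proof.
  intros Hf Hg x Hx. eapply filterlim_comp_2; [apply Hf; auto|apply Hg; auto|].
  apply (filterlim_mult (K := R_AbsRing)).
Qed.

Lemma WC_const c : WC (fun _ => c).
Proof. intros x Hx. apply filterlim_const. Qed.

Lemma WC_id : WC (fun x => x).
Proof.
  intros x Hx P [eps He]. exists eps. intros y Hy _. apply He; auto.
Qed.

Lemma WC_opp f : WC f -> WC (fun x => - f x).
Proof.
  intros Hf. apply (WC_comp Ropp f); auto. intros; apply continuity_pt_opp, continuity_pt_id.
Qed.

Lemma WC_minus f g : WC f -> WC g -> WC (fun x => f x - g x).
Proof. intros; apply WC_plus; auto; apply WC_opp; auto. Qed.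

Lemma WC_inv f : WC f -> (forall x, 0 <= x <= PI -> f x <> 0) -> WC (fun x => / f x).
Proof.
  intros Hf Hn. apply (WC_comp Rinv f); auto. intros x Hx.
  apply (continuity_pt_inv (fun y => y)); [apply continuity_pt_id|auto].
Qed.

Lemma WC_div f g : WC f -> WC g -> (forall x, 0 <= x <= PI -> g x <> 0) -> WC (fun x => f x / g x).
Proof. intros; apply WC_mult; auto; apply WC_inv; auto. Qed.

Lemma WC_cont g : (forall y, continuity_pt g y) -> WC g.
Proof. intros H. apply (WC_comp g (fun x => x)); auto. apply WC_id. Qed.

Lemma WC_cos k : WC (fun x => cos (k * x)).
Proof.
  apply (WC_comp cos (fun x => k * x)). intros; apply continuity_cos.
  apply WC_mult; [apply WC_const|apply WC_id].
Qed.

Lemma WC_sin k : WC (fun x => sin (k * x)).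
Proof.
  apply (WC_comp sin (fun x => k * x)). intros; apply continuity_sin.
  apply WC_mult; [apply WC_const|apply WC_id].
Qed.

Lemma WC_exp k : WC (fun x => exp (k * x)).
Proof.
  apply (WC_comp exp (fun x => k * x)). intros; apply derivable_continuous_pt, derivable_pt_exp.
  apply WC_mult; [apply WC_const|apply WC_id].
Qed.

Lemma WC_sqrt f : WC f -> (forall x, 0 <= x <= PI -> 0 < f x) -> WC (fun x => sqrt (f x)).
Proof.
  intros Hf Hp. apply (WC_comp sqrt f); auto. intros x Hx. apply sqrt_continuity_pt; auto.
Qed.

Lemma WC_bound f : WC f -> exists M, forall x, 0 <= x <= PI -> Rabs (f x) <= M.
Proof.
  intros Hf. destruct (continuity_ab_maj (fun y => Rabs (f (clamp y))) 0 PI) as [m [Hm _]].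
  - pose proof PI_RGT_0; lra.
  - intros c _. apply (continuity_pt_comp (fun y => f (clamp y)) Rabs).
    + apply WC_clamp; auto.
    + apply Rcontinuity_abs.
  - exists (Rabs (f (clamp m))). intros x Hx. specialize (Hm x Hx). simpl in Hm. rewrite clamp_id in Hm; auto.
Qed.

Lemma WC_minpos f : WC f -> (forall x, 0 <= x <= PI -> 0 < f x) ->
  exists m, 0 < m /\ forall x, 0 <= x <= PI -> m <= f x.
Proof.
  intros Hf Hp. destruct (continuity_ab_min (fun y => f (clamp y)) 0 PI) as [m [Hm _]].
  - pose proof PI_RGT_0; lra.
  - intros c _. apply WC_clamp; auto.
  - exists (f (clamp m)). split. apply Hp, clamp_in.
    intros x Hx. specialize (Hm x Hx). simpl in Hm. rewrite (clamp_id x) in Hm; auto.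
Qed.


Lemma D_eq (f : R -> R) (x l1 l2 : R) : is_derive f x l1 -> l1 = l2 -> is_derive f x l2.
Proof. intros H ->; auto. Qed.
Lemma D_plus (f g : R -> R) (x df dg : R) : is_derive f x df -> is_derive g x dg -> is_derive (fun t => f t + g t) x (df + dg).
Proof. intros; apply (is_derive_plus f g); auto. Qed.
Lemma D_minus (f g : R -> R) (x df dg : R) : is_derive f x df -> is_derive g x dg -> is_derive (fun t => f t - g t) x (df - dg).
Proof. intros; apply (is_derive_minus f g); auto. Qed.
Lemma D_opp (f : R -> R) (x df : R) : is_derive f x df -> is_derive (fun t => - f t) x (- df).
Proof. intros; apply (is_derive_opp f); auto. Qed.
Lemma D_mult (f g : R -> R) (x df dg : R) : is_derive f x df -> is_derive g x dg -> is_derive (fun t => f t * g t) x (df * g x + f x * dg).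
Proof. intros; apply (is_derive_mult f g); auto. intros; apply Rmult_comm. Qed.
Lemma D_const (c x : R) : is_derive (fun _ => c) x 0.
Proof. apply (is_derive_const c). Qed.
Lemma D_id (x : R) : is_derive (fun t => t) x 1.
Proof. apply (is_derive_id x). Qed.
Lemma D_cos k x : is_derive (fun t => cos (k * t)) x (- k * sin (k * x)).
Proof. auto_derive; auto; ring. Qed.
Lemma D_sin k x : is_derive (fun t => sin (k * t)) x (k * cos (k * x)).
Proof. auto_derive; auto; ring. Qed.
Lemma D_exp k x : is_derive (fun t => exp (k * t)) x (k * exp (k * x)).
Proof. auto_derive; auto; ring. Qed.
Lemma D_inv (f : R -> R) (x df : R) : is_derive f x df -> f x <> 0 -> is_derive (fun t => / f t) x (- df / (f x * f x)).
Proof. intros; eapply D_eq; [apply is_derive_inv; eauto|]. simpl; field; auto. Qed.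

Ltac dstep := lazymatch goal with
  | |- is_derive (fun t => _ + _) _ _ => apply D_plus
  | |- is_derive (fun t => _ - _) _ _ => apply D_minus
  | |- is_derive (fun t => - _) _ _ => apply D_opp
  | |- is_derive (fun t => cos (_ * t)) _ _ => apply D_cos
  | |- is_derive (fun t => sin (_ * t)) _ _ => apply D_sin
  | |- is_derive (fun t => exp (_ * t)) _ _ => apply D_exp
  | |- is_derive (fun t => t) _ _ => apply D_id
  | |- is_derive (fun t => _ * _) _ _ => apply D_mult
  | |- is_derive (fun t => _) _ _ => apply D_const
  end.

Lemma gron_up E dE k L : 0 < k -> 0 <= L -> WC E -> OD E dE ->
  (forall x, 0 < x < PI -> dE x <= k * E x + L) ->
  forall x, 0 <= x <= PI -> E x + L / k <= (E 0 + L / k) * exp (k * x).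
Proof.
  intros Hk HL Hc Hd Hb x Hx.
  set (h := fun t => (E t + L / k) * exp (- k * t)).
  assert (Hm := mono_dec h (fun t => (dE t - k * E t - L) * exp (- k * t))).
  assert (h x <= h 0).
  { apply Hm; try lra.
    - intros t Ht. unfold h. eapply D_eq. dstep. apply D_plus. apply Hd; auto. apply D_const. apply D_exp.
      cbv beta; field; lra.
    - unfold h. apply WC_mult. apply WC_plus; auto. apply WC_const. apply WC_exp.
    - intros t Ht. specialize (Hb t Ht). assert (0 < exp (-k*t)) by apply exp_pos. cbv beta; nra. }
  unfold h in H. replace (-k*0) with 0 in H by ring. rewrite exp_0 in H.
  assert (exp (-k*x) * exp (k*x) = 1) by (rewrite <- exp_plus; replace (-k*x+k*x) with 0 by ring; apply exp_0).
  assert (0 < exp (k*x)) by apply exp_pos.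
  assert (0 < exp (-k*x)) by apply exp_pos. 
  apply Rmult_le_compat_r with (r := exp (k*x)) in H; [|lra].
  replace ((E x + L / k) * exp (- k * x) * exp (k * x)) with (E x + L/k) in H; [lra|].
  rewrite Rmult_assoc, H0; ring.
Qed.

Lemma gron_down E dE k : WC E -> OD E dE ->
  (forall x, 0 < x < PI -> - k * E x <= dE x) ->
  forall x, 0 <= x <= PI -> E 0 * exp (- k * x) <= E x.
Proof.
  intros Hc Hd Hb x Hx.
  set (h := fun t => - (E t * exp (k * t))).
  assert (Hm := mono_dec h (fun t => - ((dE t + k * E t) * exp (k * t)))).
  assert (h x <= h 0).
  { apply Hm; try lra.
    - intros t Ht. unfold h. eapply D_eq. dstep. dstep. apply Hd; auto. apply D_exp. cbv beta; ring.
    - unfold h. apply WC_opp, WC_mult; auto. apply WC_exp.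
    - intros t Ht. specialize (Hb t Ht). assert (0 < exp (k*t)) by apply exp_pos. cbv beta; nra. }
  unfold h in H. replace (k*0) with 0 in H by ring. rewrite exp_0 in H.
  assert (exp (-k*x) * exp (k*x) = 1) by (rewrite <- exp_plus; replace (-k*x+k*x) with 0 by ring; apply exp_0).
  assert (0 < exp (-k*x)) by apply exp_pos.
  assert (Hq : E 0 <= E x * exp (k * x)) by lra.
  apply Rmult_le_compat_r with (r := exp (-k*x)) in Hq; [|lra].
  replace (E x * exp (k * x) * exp (- k * x)) with (E x) in Hq. lra.
  rewrite Rmult_assoc, (Rmult_comm (exp (k*x))), H0; ring.
Qed.


Definition UH (u du ddu : R -> R) : Prop :=
  OD u du /\ OD du ddu /\ WC u /\ WC du /\ WC ddu /\ (forall x, 0 <= x <= PI -> 0 < u x).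
Definition gf (u du : R -> R) x := du x / (2 * u x).
Definition gpf (u du ddu : R -> R) x := (ddu x * u x - du x * du x) / (2 * (u x * u x)).
Definition sf (u : R -> R) x := sqrt (u x).

Definition EF (u : R -> R) (Lam : R) (phi dphi ddphi : R -> R) : Prop :=
  OD phi dphi /\ OD dphi ddphi /\ WC phi /\ WC dphi /\
  (forall x, 0 < x < PI -> is_derive (fun y => u y * dphi y) x (- Lam * u x * phi x)) /\
  phi 0 = 0 /\ phi PI = 0.

Lemma UH_of_C2 u : C2_closed u -> (forall x, 0 <= x <= PI -> 0 < u x) -> exists du ddu, UH u du ddu.
Proof.
  intros [du [ddu [H1 H2]]] Hp. exists du, ddu.
  unfold UH, OD, WC.
  split; [intros x Hx; apply H1; auto|].
  split; [intros x Hx; apply H1; auto|].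
  split; [intros x Hx; apply H2; auto|].
  split; [intros x Hx; apply H2; auto|].
  split; [intros x Hx; apply H2; auto|auto].
Qed.


Lemma g_OD u du ddu : UH u du ddu -> OD (gf u du) (gpf u du ddu).
Proof.
  intros (Hu & Hdu & _ & _ & _ & Hp) x Hx. unfold gf, gpf.
  assert (0 < u x) by (apply Hp; lra).
  eapply D_eq. apply (D_mult du (fun t => / (2 * u t))). apply Hdu; auto.
  apply (D_inv (fun t => 2 * u t)). apply (D_mult (fun _ => 2) u). apply D_const. apply Hu; auto. lra.
  field. lra.
Qed.

Lemma s_OD u du ddu : UH u du ddu -> OD (sf u) (fun x => gf u du x * sf u x).
Proof.
  intros (Hu & Hdu & _ & _ & _ & Hp) x Hx. unfold gf, sf.
  assert (0 < u x) by (apply Hp; lra).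
  eapply D_eq. apply is_derive_sqrt. apply Hu; auto. auto.
  assert (Hs := sqrt_sqrt (u x)). assert (0 < sqrt (u x)) by (apply sqrt_lt_R0; lra).
  rewrite <- Hs at 2 by lra. field. lra.
Qed.

Lemma g_WC u du ddu : UH u du ddu -> WC (gf u du).
Proof.
  intros (Hu & Hdu & Hcu & Hcdu & _ & Hp). unfold gf. apply WC_div; auto.
  apply WC_mult; auto; apply WC_const. intros x Hx; specialize (Hp x Hx); lra.
Qed.

Lemma gp_WC u du ddu : UH u du ddu -> WC (gpf u du ddu).
Proof.
  intros (Hu & Hdu & Hcu & Hcdu & Hcddu & Hp). unfold gpf. apply WC_div; auto.
  apply WC_minus; apply WC_mult; auto.
  apply WC_mult; [apply WC_const| apply WC_mult; auto]. intros x Hx; specialize (Hp x Hx); nra.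
Qed.

Lemma s_WC u du ddu : UH u du ddu -> WC (sf u).
Proof.
  intros (Hu & Hdu & Hcu & Hcdu & Hcddu & Hp). unfold sf. apply WC_sqrt; auto.
Qed.

Lemma ddphi_eq u du ddu Lam phi dphi ddphi : UH u du ddu -> EF u Lam phi dphi ddphi ->
  forall x, 0 < x < PI -> ddphi x = - Lam * phi x - 2 * gf u du x * dphi x.
Proof.
  intros (Hu & Hdu & _ & _ & _ & Hp) (Hphi & Hdphi & _ & _ & Hfl & _) x Hx.
  assert (0 < u x) by (apply Hp; lra).
  assert (H1 := D_mult u dphi x _ _ (Hu x Hx) (Hdphi x Hx)).
  assert (H2 := Hfl x Hx).
  apply is_derive_unique in H1. apply is_derive_unique in H2. rewrite H1 in H2.
  unfold gf. apply Rmult_eq_reg_l with (u x); [|lra]. field_simplify; [|lra]. lra.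
Qed.


Lemma exp_mono x y : x <= y -> exp x <= exp y.
Proof. intros H; destruct (Rle_lt_or_eq_dec _ _ H) as [H'|H']; [left; apply exp_increasing; auto|rewrite H'; lra]. Qed.

Lemma sq_abs x y : x * x <= y -> Rabs x <= sqrt y.
Proof.
  intros H. rewrite <- sqrt_Rsqr_abs. apply sqrt_le_1_alt. unfold Rsqr. lra.
Qed.

Lemma quad_bound g G m a c : Rabs g <= G -> 2 * g * (c * c - a * a) + 2 * m * a * c <= (2 * G + Rabs m) * (a * a + c * c).
Proof.
  intros Hg. assert (Hg' : -G <= g <= G) by (apply Rabs_le_between; auto).
  assert (2 * g * (c * c - a * a) <= 2 * G * (a * a + c * c)).
  { pose proof (Rle_0_sqr a). pose proof (Rle_0_sqr c). unfold Rsqr in *.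
    destruct (Rle_dec 0 (c*c - a*a)).
    - assert ((G - g) * (c*c - a*a) >= 0) by (apply Rle_ge, Rmult_le_pos; lra). nra.
    - assert ((G + g) * (a*a - c*c) >= 0) by (apply Rle_ge, Rmult_le_pos; lra). nra. }
  assert (2 * m * a * c <= Rabs m * (a * a + c * c)).
  { pose proof (Rle_0_sqr (a - c)). pose proof (Rle_0_sqr (a + c)). unfold Rsqr in *.
    unfold Rabs; destruct Rcase_abs.
    - assert ((-m) * ((a + c) * (a + c)) >= 0) by (apply Rle_ge, Rmult_le_pos; lra). nra.
    - assert (m * ((a - c) * (a - c)) >= 0) by (apply Rle_ge, Rmult_le_pos; lra). nra. }
  lra.
Qed.

Lemma ac_OD u du ddu Lam phi dphi ddphi : UH u du ddu -> EF u Lam phi dphi ddphi ->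
  OD (fun x => sf u x * dphi x) (fun x => - gf u du x * (sf u x * dphi x) - Lam * (sf u x * phi x)) /\
  OD (fun x => sf u x * phi x) (fun x => gf u du x * (sf u x * phi x) + sf u x * dphi x) /\
  WC (fun x => sf u x * dphi x) /\ WC (fun x => sf u x * phi x).
Proof.
  intros HU HE. pose proof (ddphi_eq _ _ _ _ _ _ _ HU HE) as Hdd.
  pose proof (s_OD _ _ _ HU) as Hs. pose proof (s_WC _ _ _ HU) as Hsc.
  destruct HE as (Hphi & Hdphi & Hcphi & Hcdphi & _).
  split; [|split; [|split]].
  - intros x Hx. eapply D_eq. apply D_mult. apply Hs; auto. apply Hdphi; auto.
    rewrite Hdd by auto. ring.
  - intros x Hx. eapply D_eq. apply D_mult. apply Hs; auto. apply Hphi; auto. ring.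
  - apply WC_mult; auto.
  - apply WC_mult; auto.
Qed.

Lemma NT u du ddu Lam phi dphi ddphi : UH u du ddu -> EF u Lam phi dphi ddphi ->
  dphi 0 = 0 -> forall x, 0 <= x <= PI -> phi x = 0.
Proof.
  intros HU HE H0 x Hx.
  destruct (ac_OD _ _ _ _ _ _ _ HU HE) as (Ha & Hc & Hca & Hcc).
  destruct (WC_bound _ (g_WC _ _ _ HU)) as [G HG].
  set (a := fun x => sf u x * dphi x) in *. set (c := fun x => sf u x * phi x) in *.
  set (k := 2 * G + Rabs (1 - Lam) + 1).
  assert (HG0 : 0 <= G) by (specialize (HG 0); pose proof PI_RGT_0; pose proof (Rabs_pos (gf u du 0)); apply Rle_trans with (Rabs (gf u du 0)); auto; apply HG; lra).
  assert (Hk : 0 < k) by (unfold k; pose proof (Rabs_pos (1 - Lam)); lra).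
  assert (Hg := gron_up (fun x => a x * a x + c x * c x)
     (fun x => 2 * a x * (- gf u du x * a x - Lam * c x) + 2 * c x * (gf u du x * c x + a x)) k 0 Hk (Rle_refl 0)).
  assert (HE0 : a 0 * a 0 + c 0 * c 0 = 0).
  { unfold a, c. rewrite H0. destruct HE as (_&_&_&_&_&->&_). ring. }
  assert (Hx' := Hg).
  assert (a x * a x + c x * c x <= 0).
  { assert (HH : a x * a x + c x * c x + 0 / k <= (a 0 * a 0 + c 0 * c 0 + 0 / k) * exp (k * x)).
    { apply Hg; auto.
      - apply WC_plus; apply WC_mult; auto.
      - intros t Ht. eapply D_eq. apply D_plus; apply D_mult.
      all: try lazymatch goal with |- is_derive ?f _ _ => first [constr_eq f a; apply Ha; lra | constr_eq f c; apply Hc; lra] end.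
      cbv beta; unfold a, c; ring.
      - intros t Ht. 
        assert (Hq := quad_bound (gf u du t) G (1 - Lam) (a t) (c t) (HG t ltac:(lra))).
        assert (0 <= a t * a t + c t * c t) by nra. unfold k. nra. }
    rewrite HE0 in HH. unfold Rdiv in HH. rewrite Rmult_0_l, Rplus_0_r, Rplus_0_r, Rmult_0_l in HH. auto. }
  assert (c x = 0) by nra.
  unfold c, sf in H1. destruct HU as (_&_&_&_&_&Hp). assert (0 < sqrt (u x)) by (apply sqrt_lt_R0; apply Hp; auto).
  nra.
Qed.


Lemma sq_abs2 x y : x * x <= y * y -> 0 <= y -> Rabs x <= y.
Proof.
  intros H Hy. rewrite <- (Rabs_pos_eq y Hy). apply Rsqr_le_abs_0. unfold Rsqr; lra.
Qed.

Lemma sf_sq u du ddu x : UH u du ddu -> 0 <= x <= PI -> sf u x * sf u x = u x.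
Proof. intros (_&_&_&_&_&Hp) Hx. unfold sf. apply sqrt_sqrt. left; apply Hp; auto. Qed.

Lemma Ebound u du ddu G Bd Lam phi dphi ddphi : UH u du ddu -> EF u Lam phi dphi ddphi ->
  (forall x, 0 <= x <= PI -> Rabs (gf u du x) <= G) -> 0 <= G -> 0 <= Bd -> -Bd <= Lam <= Bd ->
  dphi 0 = 1 ->
  forall x, 0 <= x <= PI ->
   (sf u x * dphi x) * (sf u x * dphi x) + (sf u x * phi x) * (sf u x * phi x)
     <= u 0 * exp ((2 * G + (1 + Bd) + 1) * PI).
Proof.
  intros HU HE HG HG0 HB HL H0 x Hx.
  destruct (ac_OD _ _ _ _ _ _ _ HU HE) as (Ha & Hc & Hca & Hcc).
  set (a := fun x => sf u x * dphi x) in *. set (c := fun x => sf u x * phi x) in *.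
  set (k := 2 * G + (1 + Bd) + 1).
  assert (Hk : 0 < k) by (unfold k; lra).
  assert (Hg := gron_up (fun x => a x * a x + c x * c x)
     (fun x => 2 * a x * (- gf u du x * a x - Lam * c x) + 2 * c x * (gf u du x * c x + a x)) k 0 Hk (Rle_refl 0)).
  assert (HE0 : a 0 * a 0 + c 0 * c 0 = u 0).
  { unfold a, c. rewrite H0. destruct HE as (_&_&_&_&_&->&_).
    rewrite <- (sf_sq u du ddu 0 HU). ring. pose proof PI_RGT_0; lra. }
  assert (HH : a x * a x + c x * c x + 0 / k <= (a 0 * a 0 + c 0 * c 0 + 0 / k) * exp (k * x)).
  { apply Hg; auto.
    - apply WC_plus; apply WC_mult; auto.
    - intros t Ht. eapply D_eq. apply D_plus; apply D_mult.
      all: try lazymatch goal with |- is_derive ?f _ _ => first [constr_eq f a; apply Ha; lra | constr_eq f c; apply Hc; lra] end.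
      cbv beta; unfold a, c; ring.
    - intros t Ht. 
      assert (Hq := quad_bound (gf u du t) G (1 - Lam) (a t) (c t) (HG t ltac:(lra))).
      assert (Rabs (1 - Lam) <= 1 + Bd) by (apply Rabs_le; lra).
      pose proof (Rle_0_sqr (a t)). pose proof (Rle_0_sqr (c t)). unfold Rsqr in *.
      cbv beta. unfold k. nra. }
  rewrite HE0 in HH. unfold Rdiv in HH. rewrite Rmult_0_l, Rplus_0_r, Rplus_0_r in HH.
  assert (exp (k * x) <= exp (k * PI)) by (apply exp_mono; apply Rmult_le_compat_l; lra).
  assert (0 < u 0) by (destruct HU as (_&_&_&_&_&Hp); apply Hp; pose proof PI_RGT_0; lra).
  fold k. unfold a, c in HH. nra.
Qed.

Lemma phi_bounds u du ddu G Bd umin Lam phi dphi ddphi : UH u du ddu -> EF u Lam phi dphi ddphi ->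
  (forall x, 0 <= x <= PI -> Rabs (gf u du x) <= G) -> 0 <= G -> 0 <= Bd -> -Bd <= Lam <= Bd ->
  0 < umin -> (forall x, 0 <= x <= PI -> umin <= u x) ->
  dphi 0 = 1 ->
  forall x, 0 <= x <= PI ->
   phi x * phi x <= u 0 * exp ((2 * G + (1 + Bd) + 1) * PI) / umin /\
   dphi x * dphi x <= u 0 * exp ((2 * G + (1 + Bd) + 1) * PI) / umin.
Proof.
  intros HU HE HG HG0 HB HL Hm Hmin H0 x Hx.
  assert (H := Ebound _ _ _ _ _ _ _ _ _ HU HE HG HG0 HB HL H0 x Hx).
  assert (Hs := sf_sq u du ddu x HU Hx).
  set (M := u 0 * exp ((2 * G + (1 + Bd) + 1) * PI)) in *.
  assert (Hux := Hmin x Hx).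
  replace (sf u x * dphi x * (sf u x * dphi x)) with (u x * (dphi x * dphi x)) in H by (rewrite <- Hs; ring).
  replace (sf u x * phi x * (sf u x * phi x)) with (u x * (phi x * phi x)) in H by (rewrite <- Hs; ring).
  pose proof (Rle_0_sqr (phi x)). pose proof (Rle_0_sqr (dphi x)). unfold Rsqr in *.
  split; apply Rmult_le_reg_l with umin; auto; unfold Rdiv; field_simplify; try lra; nra.
Qed.


Lemma sepB u du ddu : UH u du ddu -> forall Bd, 0 <= Bd -> exists dl, 0 < dl /\
  forall L1 L2 p1 dp1 ddp1 p2 dp2 ddp2, EF u L1 p1 dp1 ddp1 -> EF u L2 p2 dp2 ddp2 ->
  dp1 0 = 1 -> dp2 0 = 1 -> -Bd <= L1 -> L1 < L2 -> L2 <= Bd -> dl <= L2 - L1.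
Proof.
  intros HU Bd HB.
  destruct (WC_bound _ (g_WC _ _ _ HU)) as [G HG].
  pose proof PI_RGT_0 as Hpi. pose proof PI2_3_2 as Hpi3.
  assert (HG0 : 0 <= G) by (apply Rle_trans with (Rabs (gf u du 0)); [apply Rabs_pos|apply HG; lra]).
  assert (HUc := HU). destruct HUc as (Hu & Hdu & Hcu & Hcdu & Hcddu & Hp).
  destruct (WC_minpos u Hcu Hp) as [umin [Hum Humin]].
  destruct (WC_bound u Hcu) as [UM HUM].
  assert (Hu0 : 0 < u 0) by (apply Hp; lra).
  assert (HUM0 : 0 < UM) by (specialize (HUM 0 ltac:(lra)); rewrite Rabs_pos_eq in HUM; lra).
  set (k := 2 * G + (1 + Bd) + 1).
  set (M1 := u 0 * exp (k * PI)).
  assert (HM1 : 0 < M1) by (unfold M1; apply Rmult_lt_0_compat; auto; apply exp_pos).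
  set (Q1 := M1 / umin).
  assert (HQ1 : 0 < Q1) by (unfold Q1; apply Rdiv_lt_0_compat; auto).
  set (K2 := (Bd + 2 * G) * sqrt Q1).
  assert (HK2 : 0 <= K2) by (unfold K2; apply Rmult_le_pos; [lra|apply sqrt_pos]).
  set (dlt := 1 / (2 * (K2 + 1))).
  assert (Hdlt : 0 < dlt <= 1/2).
  { unfold dlt; split. apply Rdiv_lt_0_compat; lra. apply Rmult_le_reg_l with (2 * (K2 + 1)); [lra|]. field_simplify; lra. }
  assert (Hdk : K2 * dlt <= 1/2).
  { unfold dlt. apply Rmult_le_reg_l with (2 * (K2 + 1)); [lra|]. field_simplify; lra. }
  clearbody dlt.
  set (kk := k + 1).
  assert (Hkk : 0 < kk) by (unfold kk, k; lra).
  set (M2 := M1 * exp (kk * PI) / kk).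
  assert (HM2 : 0 < M2) by (unfold M2; apply Rdiv_lt_0_compat; auto; apply Rmult_lt_0_compat; auto; apply exp_pos).
  set (P := sqrt (Q1 * (M2 / umin))).
  assert (HP : 0 < P) by (apply sqrt_lt_R0; apply Rmult_lt_0_compat; auto; apply Rdiv_lt_0_compat; auto).
  exists (umin * (dlt * dlt * dlt) / (32 * UM * P * PI)).
  assert (Hd3 : 0 < dlt * dlt * dlt) by (apply (Rmult_lt_0_compat (dlt*dlt)); [apply Rmult_lt_0_compat|]; lra).
  assert (Hden : 0 < 32 * UM * P * PI).
  { apply (Rmult_lt_0_compat (32*UM*P)); [|lra]. apply (Rmult_lt_0_compat (32*UM)); [|lra]. apply Rmult_lt_0_compat; lra. }
  split. { apply Rdiv_lt_0_compat; [apply Rmult_lt_0_compat|]; lra. }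
  intros L1 L2 p1 dp1 ddp1 p2 dp2 ddp2 HE1 HE2 H10 H20 HL1 HL12 HL2.
  set (Dl := L2 - L1).
  assert (HDl : 0 < Dl) by (unfold Dl; lra).
  assert (HB1 := phi_bounds _ _ _ _ _ _ _ _ _ _ HU HE1 HG HG0 HB ltac:(lra) Hum Humin H10).
  assert (HB2 := phi_bounds _ _ _ _ _ _ _ _ _ _ HU HE2 HG HG0 HB ltac:(lra) Hum Humin H20).
  fold k M1 Q1 in HB1, HB2.
  assert (HEb1 := Ebound _ _ _ _ _ _ _ _ _ HU HE1 HG HG0 HB ltac:(lra) H10).
  fold k M1 in HEb1.
  assert (Hdd : forall c, 0 < c < PI -> Rabs (ddp1 c) <= K2).
  { intros c Hc. rewrite (ddphi_eq _ _ _ _ _ _ _ HU HE1 c Hc).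
    destruct (HB1 c ltac:(lra)) as [Hb1 Hb2].
    assert (Ha1 := sq_abs _ _ Hb1). assert (Ha2 := sq_abs _ _ Hb2).
    assert (HgC := HG c ltac:(lra)).
    assert (HLa : Rabs L1 <= Bd) by (apply Rabs_le; lra).
    unfold Rminus. eapply Rle_trans; [apply Rabs_triang|].
    rewrite Rabs_Ropp, !Rabs_mult, Rabs_Ropp, (Rabs_pos_eq 2) by lra.
    assert (Rabs L1 * Rabs (p1 c) <= Bd * sqrt Q1) by (apply Rmult_le_compat; auto; apply Rabs_pos).
    assert (Rabs (gf u du c) * Rabs (dp1 c) <= G * sqrt Q1) by (apply Rmult_le_compat; auto; apply Rabs_pos).
    unfold K2. lra. }
  assert (Hdp : forall y, 0 < y <= dlt -> 1/2 <= dp1 y).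
  { intros y Hy. destruct HE1 as (Hd1 & Hd2 & Hc1 & Hc2 & _).
    destruct (mvt dp1 ddp1 0 y ltac:(lra) ltac:(lra) ltac:(lra) Hd2 Hc2) as [c [Hc Ec]].
    assert (Hdc := Hdd c ltac:(lra)). apply Rabs_le_between in Hdc.
    rewrite H10 in Ec.
    assert (ddp1 c * (y - 0) >= - (K2 * y)) by nra.
    assert (K2 * y <= K2 * dlt) by (apply Rmult_le_compat_l; lra). lra. }
  assert (Hlow : forall x, 0 < x <= dlt -> x / 2 <= p1 x).
  { intros x Hx. assert (HE1c := HE1). destruct HE1c as (Hd1 & Hd2 & Hc1 & Hc2 & _ & Hz & _).
    destruct (mvt p1 dp1 0 x ltac:(lra) ltac:(lra) ltac:(lra) Hd1 Hc1) as [c [Hc Ec]].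
    assert (Hdc := Hdp c ltac:(lra)). rewrite Hz in Ec. nra. }
  assert (HD : forall x, 0 <= x <= PI -> Rabs (p1 x * (p2 x - p1 x)) <= P * Dl).
  { destruct (ac_OD _ _ _ _ _ _ _ HU HE1) as (Ha1 & Hc1 & Hca1 & Hcc1).
    destruct (ac_OD _ _ _ _ _ _ _ HU HE2) as (Ha2 & Hc2 & Hca2 & Hcc2).
    set (a1 := fun x => sf u x * dp1 x) in *. set (c1 := fun x => sf u x * p1 x) in *.
    set (a2 := fun x => sf u x * dp2 x) in *. set (c2 := fun x => sf u x * p2 x) in *.
    set (LL := Dl * Dl * M1).
    assert (HLL : 0 <= LL) by (unfold LL; apply Rmult_le_pos; [apply Rle_0_sqr|lra]).
    assert (Hg := gron_up (fun x => (a2 x - a1 x) * (a2 x - a1 x) + (c2 x - c1 x) * (c2 x - c1 x))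
      (fun x => 2 * (a2 x - a1 x) * ((- gf u du x * a2 x - L2 * c2 x) - (- gf u du x * a1 x - L1 * c1 x))
              + 2 * (c2 x - c1 x) * ((gf u du x * c2 x + a2 x) - (gf u du x * c1 x + a1 x))) kk LL Hkk HLL).
    assert (HE0 : (a2 0 - a1 0) * (a2 0 - a1 0) + (c2 0 - c1 0) * (c2 0 - c1 0) = 0).
    { unfold a1, a2, c1, c2. rewrite H10, H20. destruct HE1 as (_&_&_&_&_&->&_). destruct HE2 as (_&_&_&_&_&->&_). ring. }
    intros x Hx.
    assert (HH : (a2 x - a1 x) * (a2 x - a1 x) + (c2 x - c1 x) * (c2 x - c1 x) + LL / kk
       <= ((a2 0 - a1 0) * (a2 0 - a1 0) + (c2 0 - c1 0) * (c2 0 - c1 0) + LL / kk) * exp (kk * x)).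
    { apply Hg; auto.
      - apply WC_plus; apply WC_mult; apply WC_minus; auto.
      - intros t Ht. eapply D_eq. apply D_plus; apply D_mult; apply D_minus.
        all: try lazymatch goal with |- is_derive ?f _ _ => first [constr_eq f a2; apply Ha2; lra | constr_eq f a1; apply Ha1; lra | constr_eq f c2; apply Hc2; lra | constr_eq f c1; apply Hc1; lra] end.


        cbv beta; unfold a1, a2, c1, c2; ring.
      - intros t Ht. cbv beta.
        set (A := a2 t - a1 t). set (C := c2 t - c1 t).
        assert (Hq := quad_bound (gf u du t) G (1 - L2) A C (HG t ltac:(lra))).
        assert (Rabs (1 - L2) <= 1 + Bd) by (apply Rabs_le; lra).
        assert (Hc1b : c1 t * c1 t <= M1).
        { pose proof (HEb1 t ltac:(lra)). pose proof (Rle_0_sqr (a1 t)). unfold Rsqr in *. unfold a1, c1 in *. lra. }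
        pose proof (Rle_0_sqr A). pose proof (Rle_0_sqr C). pose proof (Rle_0_sqr (A + Dl * c1 t)). unfold Rsqr in *.
        replace (2 * A * (- gf u du t * a2 t - L2 * c2 t - (- gf u du t * a1 t - L1 * c1 t)) +
          2 * C * (gf u du t * c2 t + a2 t - (gf u du t * c1 t + a1 t)))
          with (2 * gf u du t * (C * C - A * A) + 2 * (1 - L2) * A * C - 2 * Dl * A * c1 t)
          by (unfold A, C, Dl; ring).
        assert (2 * G + Rabs (1 - L2) <= k) by (unfold k; lra).
        assert ((2 * G + Rabs (1 - L2)) * (A * A + C * C) <= k * (A * A + C * C)) by (apply Rmult_le_compat_r; lra).
        assert (Dl * Dl * (c1 t * c1 t) <= LL) by (unfold LL; apply Rmult_le_compat_l; [apply Rle_0_sqr|lra]).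
        assert (0 <= A*A + 2*Dl*A*c1 t + Dl*Dl*(c1 t * c1 t)) by
          (replace (A*A + 2*Dl*A*c1 t + Dl*Dl*(c1 t * c1 t)) with ((A + Dl*c1 t)*(A + Dl*c1 t)) by ring; apply Rle_0_sqr).
        unfold kk. lra. }
    rewrite HE0 in HH.
    assert (exp (kk * x) <= exp (kk * PI)) by (apply exp_mono; apply Rmult_le_compat_l; lra).
    assert (HED : (c2 x - c1 x) * (c2 x - c1 x) <= Dl * Dl * M2).
    { pose proof (Rle_0_sqr (a2 x - a1 x)). pose proof (Rle_0_sqr (c2 x - c1 x)). unfold Rsqr in *.
      assert (0 <= LL / kk) by (apply Rdiv_le_0_compat; lra).
      assert ((0 + LL / kk) * exp (kk * x) <= (LL / kk) * exp (kk * PI)) by (rewrite Rplus_0_l; apply Rmult_le_compat_l; lra).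
      replace (Dl * Dl * M2) with (LL / kk * exp (kk * PI)) by (unfold LL, M2; field; lra). lra. }
    assert (Hs := sf_sq u du ddu x HU Hx).
    replace ((c2 x - c1 x) * (c2 x - c1 x)) with (u x * ((p2 x - p1 x) * (p2 x - p1 x))) in HED
      by (unfold c1, c2; rewrite <- Hs; ring).
    assert (HDD : (p2 x - p1 x) * (p2 x - p1 x) <= Dl * Dl * (M2 / umin)).
    { apply Rmult_le_reg_l with umin; auto. pose proof (Humin x Hx). pose proof (Rle_0_sqr (p2 x - p1 x)). unfold Rsqr in *.
      unfold Rdiv. field_simplify; [|lra]. nra. }
    destruct (HB1 x Hx) as [Hp1 _].
    apply sq_abs2; [|apply Rmult_le_pos; lra].
    assert (HPP : P * P = Q1 * (M2 / umin)).
    { unfold P. apply sqrt_sqrt. apply Rmult_le_pos; [lra|]. apply Rdiv_le_0_compat; lra. }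
    replace (P * Dl * (P * Dl)) with ((P * P) * (Dl * Dl)) by ring. rewrite HPP.
    replace (p1 x * (p2 x - p1 x) * (p1 x * (p2 x - p1 x))) with ((p1 x * p1 x) * ((p2 x - p1 x) * (p2 x - p1 x))) by ring.
    replace (Q1 * (M2 / umin) * (Dl * Dl)) with (Q1 * (Dl * Dl * (M2 / umin))) by ring.
    apply Rmult_le_compat; try (apply Rle_0_sqr); auto. }
  set (W := fun x => u x * dp1 x * p2 x - p1 x * (u x * dp2 x)).
  assert (HWd : OD W (fun x => Dl * (u x * p1 x * p2 x))).
  { intros x Hx. destruct HE1 as (Hd1 & Hd2 & Hc1 & Hc2 & Hf1 & _).
    destruct HE2 as (Hd1' & Hd2' & Hc1' & Hc2' & Hf2 & _).
    unfold W. eapply D_eq.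
    apply (D_minus (fun t => u t * dp1 t * p2 t) (fun t => p1 t * (u t * dp2 t))).
    apply (D_mult (fun t => u t * dp1 t) p2). apply Hf1; auto. apply Hd1'; auto.
    apply (D_mult p1 (fun t => u t * dp2 t)). apply Hd1; auto. apply Hf2; auto.
    unfold Dl; ring. }
  assert (HWc : WC W).
  { destruct HE1 as (Hd1 & Hd2 & Hc1 & Hc2 & Hf1 & _).
    destruct HE2 as (Hd1' & Hd2' & Hc1' & Hc2' & Hf2 & _).
    unfold W. apply WC_minus; repeat apply WC_mult; auto. }
  assert (HW0 : W 0 = 0).
  { unfold W. destruct HE1 as (_&_&_&_&_&->&_). destruct HE2 as (_&_&_&_&_&->&_). ring. }
  assert (HWpi : W PI = 0).
  { unfold W. destruct HE1 as (_&_&_&_&_&_&->). destruct HE2 as (_&_&_&_&_&_&->). ring. }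
  assert (HT : forall x, 0 <= x <= PI -> - (UM * (P * Dl)) <= u x * p1 x * p2 x).
  { intros x Hx. assert (H1 := HD x Hx). apply Rabs_le_between in H1.
    assert (Hux := Hp x Hx). assert (HUx := HUM x Hx). rewrite Rabs_pos_eq in HUx by lra.
    replace (u x * p1 x * p2 x) with (u x * (p1 x * p1 x) + u x * (p1 x * (p2 x - p1 x))) by ring.
    assert (0 <= u x * (p1 x * p1 x)) by (apply Rmult_le_pos; [lra| apply Rle_0_sqr]).
    assert (u x * (p1 x * (p2 x - p1 x)) >= - (u x * (P * Dl))) by nra.
    assert (u x * (P * Dl) <= UM * (P * Dl)) by (apply Rmult_le_compat_r; [nra|lra]).
    lra. }
  destruct (mvt W _ 0 (dlt/2) ltac:(lra) ltac:(lra) ltac:(lra) HWd HWc) as [x1 [Hx1 E1]].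
  destruct (mvt W _ (dlt/2) dlt ltac:(lra) ltac:(lra) ltac:(lra) HWd HWc) as [x2 [Hx2 E2]].
  destruct (mvt W _ dlt PI ltac:(lra) ltac:(lra) ltac:(lra) HWd HWc) as [x3 [Hx3 E3]].
  assert (Hmid : umin * (dlt * dlt / 16) - UM * (P * Dl) <= u x2 * p1 x2 * p2 x2).
  { assert (Hx : 0 <= x2 <= PI) by lra.
    assert (H1 := HD x2 Hx). apply Rabs_le_between in H1.
    assert (Hux := Hp x2 Hx). assert (HUx := HUM x2 Hx). rewrite Rabs_pos_eq in HUx by lra.
    assert (Hl := Hlow x2 ltac:(lra)).
    assert (Hq : dlt * dlt / 16 <= p1 x2 * p1 x2) by nra.
    replace (u x2 * p1 x2 * p2 x2) with (u x2 * (p1 x2 * p1 x2) + u x2 * (p1 x2 * (p2 x2 - p1 x2))) by ring.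
    assert (umin * (dlt * dlt / 16) <= u x2 * (p1 x2 * p1 x2)).
    { apply Rmult_le_compat; [lra | nra | apply Humin; lra | lra]. }
    assert (u x2 * (p1 x2 * (p2 x2 - p1 x2)) >= - (u x2 * (P * Dl))) by nra.
    assert (u x2 * (P * Dl) <= UM * (P * Dl)) by (apply Rmult_le_compat_r; [nra|lra]).
    lra. }
  assert (HT1 := HT x1 ltac:(lra)). assert (HT3 := HT x3 ltac:(lra)).
  set (X := UM * (P * Dl)) in *.
  set (T1 := u x1 * p1 x1 * p2 x1) in *. set (T2 := u x2 * p1 x2 * p2 x2) in *.
  set (T3 := u x3 * p1 x3 * p2 x3) in *.
  assert (Hsum : Dl * (T1 * (dlt/2) + T2 * (dlt/2) + T3 * (PI - dlt)) = 0).
  { replace (Dl * (T1 * (dlt/2) + T2 * (dlt/2) + T3 * (PI - dlt))) with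
      ((W (dlt/2) - W 0) + (W dlt - W (dlt/2)) + (W PI - W dlt)).
    rewrite HW0, HWpi. lra. rewrite E1, E2, E3. unfold T1, T2, T3. unfold Dl. nra. }
  assert (Hs0 : T1 * (dlt/2) + T2 * (dlt/2) + T3 * (PI - dlt) = 0).
  { apply Rmult_eq_reg_l with Dl; [|lra]. rewrite Hsum; ring. }
  assert (T1 * (dlt/2) >= - X * (dlt/2)) by (apply Rle_ge, Rmult_le_compat_r; lra).
  assert (T3 * (PI - dlt) >= - X * (PI - dlt)) by (apply Rle_ge, Rmult_le_compat_r; lra).
  assert (T2 * (dlt/2) >= (umin * (dlt * dlt / 16) - X) * (dlt/2)) by (apply Rle_ge, Rmult_le_compat_r; lra).
  assert (Hfin : umin * (dlt * dlt * dlt) <= Dl * (32 * UM * P * PI)).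
  { unfold X in *. nra. }
  apply Rmult_le_reg_r with (32 * UM * P * PI); [lra|]. unfold Rdiv. rewrite Rmult_assoc, Rinv_l; lra.
Qed.


Lemma apl x y X Y : Rabs x <= X -> Rabs y <= Y -> Rabs (x * y) <= X * Y.
Proof. intros; rewrite Rabs_mult; apply Rmult_le_compat; auto; apply Rabs_pos. Qed.

Lemma abs_half : Rabs (/ 2) <= / 2.
Proof. rewrite Rabs_pos_eq. lra. left; apply Rinv_0_lt_compat; lra. Qed.

Lemma abs_sub x y : Rabs (x - y) <= Rabs x + Rabs y.
Proof. unfold Rminus; rewrite <- (Rabs_Ropp y); apply Rabs_triang. Qed.

Lemma coreA (a b g gp : R -> R) (lam G G1 : R) : 0 < lam -> 0 <= G -> 0 <= G1 ->
  OD a (fun x => - g x * a x - lam * b x) -> OD b (fun x => g x * b x + lam * a x) -> OD g gp ->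
  WC a -> WC b -> WC g ->
  (forall x, 0 <= x <= PI -> Rabs (g x) <= G) -> (forall x, 0 <= x <= PI -> Rabs (gp x) <= G1) ->
  b 0 = 0 -> b PI = 0 -> a 0 <> 0 ->
  Rabs (sin (lam * PI)) * lam <=
   (G * sqrt (exp ((2 * G + 1) * PI)) + PI * (G1 + G * G) * exp ((2 * G + 1) * PI) + G) / 2.
Proof.
  intros Hlam HG0 HG10 Ha Hb Hg Hca Hcb Hcg HG HG1 Hb0 Hbpi Ha0.
  pose proof PI_RGT_0 as Hpi.
  assert (Hk : 0 < 2 * G + 1) by lra.
  assert (HWE : WC (fun x => a x * a x + b x * b x)) by (apply WC_plus; apply WC_mult; auto).
  assert (HODE : OD (fun x => a x * a x + b x * b x)
     (fun x => 2 * a x * (- g x * a x - lam * b x) + 2 * b x * (g x * b x + lam * a x))).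
  { intros t Ht. eapply D_eq. apply D_plus; apply D_mult.
    all: try lazymatch goal with |- is_derive ?f _ _ => first [constr_eq f a; apply Ha; lra | constr_eq f b; apply Hb; lra] end.
    cbv beta; ring. }
  assert (Hdb : forall t, 0 < t < PI -> Rabs (2 * a t * (- g t * a t - lam * b t) + 2 * b t * (g t * b t + lam * a t))
            <= (2 * G + 1) * (a t * a t + b t * b t)).
  { intros t Ht. replace (2 * a t * (- g t * a t - lam * b t) + 2 * b t * (g t * b t + lam * a t))
      with (2 * g t * (b t * b t - a t * a t)) by ring.
    assert (Hgt := HG t ltac:(lra)). apply Rabs_le_between in Hgt.
    pose proof (Rle_0_sqr (a t)). pose proof (Rle_0_sqr (b t)). unfold Rsqr in *.
    apply Rabs_le. split.
    - destruct (Rle_dec 0 (b t * b t - a t * a t)).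
      + assert ((G + g t) * (b t * b t - a t * a t) >= 0) by (apply Rle_ge, Rmult_le_pos; lra). nra.
      + assert ((G - g t) * (a t * a t - b t * b t) >= 0) by (apply Rle_ge, Rmult_le_pos; lra). nra.
    - destruct (Rle_dec 0 (b t * b t - a t * a t)).
      + assert ((G - g t) * (b t * b t - a t * a t) >= 0) by (apply Rle_ge, Rmult_le_pos; lra). nra.
      + assert ((G + g t) * (a t * a t - b t * b t) >= 0) by (apply Rle_ge, Rmult_le_pos; lra). nra. }
  assert (HEup : forall x, 0 <= x <= PI -> a x * a x + b x * b x <= (a 0 * a 0) * exp ((2 * G + 1) * PI)).
  { intros x Hx.
    assert (Hgu := gron_up _ _ (2 * G + 1) 0 Hk (Rle_refl 0) HWE HODE).
    assert (Hx' := Hgu ltac:(intros t Ht; specialize (Hdb t Ht); apply Rabs_le_between in Hdb; cbv beta; lra) x Hx).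
    cbv beta in Hx'. rewrite Hb0 in Hx'. unfold Rdiv in Hx'. rewrite Rmult_0_l, Rplus_0_r, Rplus_0_r in Hx'.
    replace (a 0 * a 0 + 0 * 0) with (a 0 * a 0) in Hx' by ring.
    assert (exp ((2 * G + 1) * x) <= exp ((2 * G + 1) * PI)) by (apply exp_mono; apply Rmult_le_compat_l; lra).
    pose proof (Rle_0_sqr (a 0)). unfold Rsqr in *. nra. }
  assert (HEdn : (a 0 * a 0) * exp (- (2 * G + 1) * PI) <= a PI * a PI).
  { assert (Hgd := gron_down _ _ (2 * G + 1) HWE HODE).
    assert (Hx' := Hgd ltac:(intros t Ht; specialize (Hdb t Ht); apply Rabs_le_between in Hdb; cbv beta; lra) PI ltac:(lra)).
    cbv beta in Hx'. rewrite Hb0, Hbpi in Hx'. 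
    replace (a 0 * a 0 + 0 * 0) with (a 0 * a 0) in Hx' by ring.
    replace (a PI * a PI + 0 * 0) with (a PI * a PI) in Hx' by ring. auto. }
  assert (Hexpi : exp (- (2 * G + 1) * PI) * exp ((2 * G + 1) * PI) = 1).
  { rewrite <- exp_plus. replace (- (2 * G + 1) * PI + (2 * G + 1) * PI) with 0 by ring. apply exp_0. }
  assert (HH : 0 < exp ((2 * G + 1) * PI)) by apply exp_pos.
  assert (Hh2 : sqrt (exp ((2 * G + 1) * PI)) * sqrt (exp ((2 * G + 1) * PI)) = exp ((2 * G + 1) * PI))
    by (apply sqrt_sqrt; lra).
  assert (Hh2p : 0 < sqrt (exp ((2 * G + 1) * PI))) by (apply sqrt_lt_R0; lra).
  assert (HEdn' : a 0 * a 0 <= exp ((2 * G + 1) * PI) * (a PI * a PI)).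
  { apply Rmult_le_compat_l with (r := exp ((2 * G + 1) * PI)) in HEdn; [|lra].
    replace (exp ((2 * G + 1) * PI) * (a 0 * a 0 * exp (- (2 * G + 1) * PI))) with (a 0 * a 0) in HEdn; auto.
    rewrite (Rmult_comm (a 0 * a 0)), <- Rmult_assoc, (Rmult_comm (exp _)), Hexpi. ring. }
  clear HEdn Hexpi Hdb HODE HWE.
  revert Hh2 Hh2p HH HEup HEdn'. generalize (sqrt (exp ((2 * G + 1) * PI))) as h2.
  generalize (exp ((2 * G + 1) * PI)) as H. intros H h2 Hh2 Hh2p HH HEup HEdn'.
  assert (HV : OD (fun x => (b x * cos (lam * x) - a x * sin (lam * x)) + g x * (a x * cos (lam * x) - b x * sin (lam * x)) * / (2 * lam))
     (fun x => (gp x * (a x * cos (lam * x) - b x * sin (lam * x)) - g x * g x * (a x * cos (lam * x) + b x * sin (lam * x))) * / (2 * lam))).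
  { intros t Ht. eapply D_eq.
    repeat (first [ lazymatch goal with |- is_derive ?f _ _ =>
        first [constr_eq f a; apply Ha; lra | constr_eq f b; apply Hb; lra | constr_eq f g; apply Hg; lra] end
      | dstep ]).
    cbv beta. field. lra. }
  assert (HVc : WC (fun x => (b x * cos (lam * x) - a x * sin (lam * x)) + g x * (a x * cos (lam * x) - b x * sin (lam * x)) * / (2 * lam))).
  { apply WC_plus. apply WC_minus; apply WC_mult; auto using WC_cos, WC_sin.
    apply WC_mult; [|apply WC_const]. apply WC_mult; auto. apply WC_minus; apply WC_mult; auto using WC_cos, WC_sin. }
  destruct (mvt _ _ 0 PI ltac:(lra) Hpi ltac:(lra) HV HVc) as [xi [Hxi Emvt]].
  cbv beta in Emvt. rewrite Hb0, Hbpi in Emvt. rewrite Rmult_0_r, cos_0, sin_0 in Emvt.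
  assert (HSC := sin2_cos2 (lam * xi)). unfold Rsqr in HSC.
  assert (Hxi' : 0 <= xi <= PI) by lra.
  assert (HEx := HEup xi Hxi').
  remember (cos (lam * xi)) as Cx. remember (sin (lam * xi)) as Sx.
  remember (cos (lam * PI)) as C. remember (sin (lam * PI)) as S.
  assert (HP2 : (a xi * Cx - b xi * Sx) * (a xi * Cx - b xi * Sx) <= (Rabs (a 0) * h2) * (Rabs (a 0) * h2)).
  { replace (Rabs (a 0) * h2 * (Rabs (a 0) * h2)) with ((Rabs (a 0) * Rabs (a 0)) * (h2 * h2)) by ring.
    rewrite <- Rabs_mult, Rabs_pos_eq by (apply Rle_0_sqr). rewrite Hh2.
    pose proof (Rle_0_sqr (a xi * Sx + b xi * Cx)). unfold Rsqr in *.
    assert ((a xi * Cx - b xi * Sx) * (a xi * Cx - b xi * Sx) + (a xi * Sx + b xi * Cx) * (a xi * Sx + b xi * Cx)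
       = (a xi * a xi + b xi * b xi) * (Sx * Sx + Cx * Cx)) as Hid by ring.
    rewrite HSC in Hid. lra. }
  assert (HA2 : (a xi * Cx + b xi * Sx) * (a xi * Cx + b xi * Sx) <= (Rabs (a 0) * h2) * (Rabs (a 0) * h2)).
  { replace (Rabs (a 0) * h2 * (Rabs (a 0) * h2)) with ((Rabs (a 0) * Rabs (a 0)) * (h2 * h2)) by ring.
    rewrite <- Rabs_mult, Rabs_pos_eq by (apply Rle_0_sqr). rewrite Hh2.
    pose proof (Rle_0_sqr (b xi * Cx - a xi * Sx)). unfold Rsqr in *.
    assert ((a xi * Cx + b xi * Sx) * (a xi * Cx + b xi * Sx) + (b xi * Cx - a xi * Sx) * (b xi * Cx - a xi * Sx)
       = (a xi * a xi + b xi * b xi) * (Sx * Sx + Cx * Cx)) as Hid by ring.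
    rewrite HSC in Hid. lra. }
  assert (HPb := sq_abs2 _ _ HP2 ltac:(apply Rmult_le_pos; [apply Rabs_pos|lra])).
  assert (HAb := sq_abs2 _ _ HA2 ltac:(apply Rmult_le_pos; [apply Rabs_pos|lra])).
  assert (Hx1 : a PI * S = (g PI * (a PI * C) - g 0 * a 0 - PI * (gp xi * (a xi * Cx - b xi * Sx) - g xi * g xi * (a xi * Cx + b xi * Sx))) * / (2 * lam)).
  { rewrite Rmult_minus_distr_r, Rmult_minus_distr_r. lra. }
  assert (Hid : a PI * S * lam = g PI * a PI * C * / 2 - g 0 * a 0 * / 2 - PI * (gp xi * (a xi * Cx - b xi * Sx) - g xi * g xi * (a xi * Cx + b xi * Sx)) * / 2).
  { rewrite Hx1. field. lra. }
  remember (a xi * Cx - b xi * Sx) as P. remember (a xi * Cx + b xi * Sx) as A.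
  assert (HCb : Rabs C <= 1) by (rewrite HeqC; apply Rabs_le; apply COS_bound).
  assert (Hg0 := HG 0 ltac:(lra)). assert (Hgpi := HG PI ltac:(lra)).
  assert (Hgxi := HG xi Hxi'). assert (Hgpxi := HG1 xi Hxi').
  assert (Hr0 : Rabs (a 0) <= h2 * Rabs (a PI)).
  { apply sq_abs2; [|apply Rmult_le_pos; [lra|apply Rabs_pos]].
    replace (h2 * Rabs (a PI) * (h2 * Rabs (a PI))) with ((h2 * h2) * (Rabs (a PI) * Rabs (a PI))) by ring.
    rewrite <- Rabs_mult, Rabs_pos_eq by (apply Rle_0_sqr). rewrite Hh2. auto. }
  assert (Hr1 : 0 < Rabs (a PI)).
  { apply Rabs_pos_lt. intros Hz. rewrite Hz in HEdn'. 
    assert (0 < a 0 * a 0) by (apply Rsqr_pos_lt; auto). nra. }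
  set (r0 := Rabs (a 0)) in *. set (r1 := Rabs (a PI)) in *.
  assert (T1 : Rabs (g PI * a PI * C * / 2) <= G * r1 * 1 * / 2).
  { apply apl; [apply apl; [apply apl|]|]; auto; try lra; try apply Rle_refl; try apply abs_half. }
  assert (T2 : Rabs (g 0 * a 0 * / 2) <= G * (h2 * r1) * / 2).
  { apply apl; [apply apl|]; auto; try lra; try apply Rle_refl; try apply abs_half. }
  assert (T3a : Rabs (gp xi * P) <= G1 * (r0 * h2)) by (apply apl; auto).
  assert (T3b : Rabs (g xi * g xi * A) <= G * G * (r0 * h2)) by (apply apl; [apply apl|]; auto).
  assert (T3 : Rabs (PI * (gp xi * P - g xi * g xi * A) * / 2) <= PI * (G1 * (r0 * h2) + G * G * (r0 * h2)) * / 2).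
  { apply apl; [apply apl|]. rewrite Rabs_pos_eq; lra.
    eapply Rle_trans; [apply abs_sub|]. lra.
    apply abs_half. }
  assert (Htot : Rabs (a PI * S * lam) <= G * r1 * 1 * / 2 + G * (h2 * r1) * / 2 + PI * (G1 * (r0 * h2) + G * G * (r0 * h2)) * / 2).
  { rewrite Hid. eapply Rle_trans; [apply abs_sub|].
    eapply Rle_trans; [apply Rplus_le_compat_r; apply abs_sub|]. lra. }
  rewrite Rabs_mult, Rabs_mult, (Rabs_pos_eq lam) in Htot by lra. fold r1 in Htot.
  assert (Hr0h : PI * (G1 * (r0 * h2) + G * G * (r0 * h2)) <= PI * (G1 + G * G) * H * r1).
  { replace (PI * (G1 * (r0 * h2) + G * G * (r0 * h2))) with ((PI * (G1 + G * G) * h2) * r0) by ring.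
    replace (PI * (G1 + G * G) * H * r1) with ((PI * (G1 + G * G) * h2) * (h2 * r1)) by (rewrite <- Hh2; ring).
    apply Rmult_le_compat_l; auto. apply Rmult_le_pos; [apply Rmult_le_pos|]; try lra; nra. }
  apply Rmult_le_reg_l with r1; auto.
  replace (r1 * (Rabs S * lam)) with (r1 * Rabs S * lam) by ring.
  replace (r1 * ((G * h2 + PI * (G1 + G * G) * H + G) / 2)) with
    (G * r1 * 1 * / 2 + G * (h2 * r1) * / 2 + PI * (G1 + G * G) * H * r1 * / 2) by (field).
  lra.
Qed.

Lemma estA u du ddu : UH u du ddu -> exists K, forall Lam phi dphi ddphi,
  EF u Lam phi dphi ddphi -> 0 < Lam -> dphi 0 <> 0 ->
  Rabs (sin (sqrt Lam * PI)) * sqrt Lam <= K.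
Proof.
  intros HU.
  pose proof PI_RGT_0 as Hpi.
  destruct (WC_bound _ (g_WC _ _ _ HU)) as [G HG].
  destruct (WC_bound _ (gp_WC _ _ _ HU)) as [G1 HG1].
  assert (HG0 : 0 <= G) by (apply Rle_trans with (Rabs (gf u du 0)); [apply Rabs_pos|apply HG; lra]).
  assert (HG10 : 0 <= G1) by (apply Rle_trans with (Rabs (gpf u du ddu 0)); [apply Rabs_pos|apply HG1; lra]).
  eexists. intros Lam phi dphi ddphi HE HL Hd0.
  set (lam := sqrt Lam).
  assert (Hlam : 0 < lam) by (apply sqrt_lt_R0; auto).
  assert (Hl2 : lam * lam = Lam) by (apply sqrt_sqrt; lra).
  destruct (ac_OD _ _ _ _ _ _ _ HU HE) as (Ha & Hc & Hca & Hcc).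
  assert (Hs0 : 0 < sf u 0) by (unfold sf; apply sqrt_lt_R0; destruct HU as (_&_&_&_&_&Hp); apply Hp; lra).
  apply (coreA (fun x => sf u x * dphi x) (fun x => lam * (sf u x * phi x)) (gf u du) (gpf u du ddu) lam G G1); auto.
  - intros x Hx. eapply D_eq; [apply Ha; auto|]. cbv beta. rewrite <- Hl2. ring.
  - intros x Hx. eapply D_eq. apply (D_mult (fun _ => lam) (fun x => sf u x * phi x)). apply D_const. apply Hc; auto.
    cbv beta. ring.
  - apply g_OD; auto.
  - apply WC_mult; auto. apply WC_const.
  - apply g_WC with ddu; auto.
  - cbv beta. destruct HE as (_&_&_&_&_&->&_). ring.
  - cbv beta. destruct HE as (_&_&_&_&_&_&->). ring.
  - cbv beta. intros Hz. apply Rmult_integral in Hz. destruct Hz; lra.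
Qed.


Lemma DSL_EF u du ddu Lam : UH u du ddu -> DSL_eigenvalue u Lam ->
  exists phi dphi ddphi, EF u Lam phi dphi ddphi /\ dphi 0 = 1.
Proof.
  intros HU [phi [dphi [ddphi (Hd & Hc & Hfl & H0 & Hpi & Hnt)]]].
  assert (HE : EF u Lam phi dphi ddphi).
  { split; [intros x Hx; apply Hd; auto|].
    split; [intros x Hx; apply Hd; auto|].
    split; [intros x Hx; apply Hc; auto|].
    split; [intros x Hx; apply Hc; auto|].
    split; auto. }
  assert (Hd0 : dphi 0 <> 0).
  { intros Hz. destruct Hnt as [x [Hx Hn]]. apply Hn. eapply NT; eauto. }
  set (k := / dphi 0).
  exists (fun x => k * phi x), (fun x => k * dphi x), (fun x => k * ddphi x).
  split.
  - destruct HE as (E1 & E2 & E3 & E4 & E5 & E6 & E7).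
    split; [intros x Hx; apply is_derive_scal; apply E1; auto|].
    split; [intros x Hx; apply is_derive_scal; apply E2; auto|].
    split; [apply WC_mult; auto; apply WC_const|].
    split; [apply WC_mult; auto; apply WC_const|].
    split; [|split; [rewrite E6; unfold k; ring|rewrite E7; unfold k; ring]].
    intros x Hx. eapply is_derive_ext with (f := fun y => k * (u y * dphi y)).
    intros t; unfold k. rewrite <- !Rmult_assoc, (Rmult_comm (/ dphi 0) (u t)). reflexivity.
    eapply D_eq. apply is_derive_scal. apply E5; auto. unfold k; ring.
  - unfold k. field. auto.
Qed.

Lemma int_abs_ge1 z : z <> 0%Z -> 1 <= Rabs (IZR z).
Proof.
  intros Hz. destruct (Z_lt_le_dec 0 z).
  - rewrite Rabs_pos_eq. apply IZR_le. lia. apply IZR_le. lia.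
  - rewrite Rabs_left1. replace 1 with (- IZR (-1)) by (simpl; ring). apply Ropp_le_contravar. apply IZR_le. lia.
    apply IZR_le. lia.
Qed.

Lemma abs_sin_shift x z : Rabs (sin (x + IZR z * PI)) = Rabs (sin x).
Proof.
  rewrite sin_plus. rewrite (sin_eq_0_1 (IZR z * PI)) by (exists z; auto).
  assert (Hc := sin2_cos2 (IZR z * PI)). rewrite (sin_eq_0_1 (IZR z * PI)) in Hc by (exists z; auto).
  unfold Rsqr in Hc. rewrite Rmult_0_r, Rplus_0_r, Rabs_mult.
  assert (Rabs (cos (IZR z * PI)) = 1).
  { assert (cos (IZR z * PI) * cos (IZR z * PI) = 1) by lra.
    unfold Rabs; destruct Rcase_abs; nra. }
  rewrite H; ring.
Qed.

Lemma sin_far (p : R) (lam : R) : 2 <= p ->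
  (forall z : Z, 1 / p <= Rabs (lam - IZR z) + 1 / (2 * p) ) ->
  sin (PI / (2 * p)) <= Rabs (sin (PI * lam)).
Proof.
  intros Hp Hd.
  destruct (base_Int_part lam) as [Hi1 Hi2].
  set (z := Int_part lam) in *. set (t := lam - IZR z).
  assert (Ht : 0 <= t < 1) by (unfold t; lra).
  assert (Hp2 : 0 < 1 / (2 * p)) by (apply Rdiv_lt_0_compat; lra).
  assert (Hpp : 1 / p = 2 * (1 / (2 * p))) by (field; lra).
  assert (Ht1 : 1 / (2 * p) <= t).
  { specialize (Hd z). fold t in Hd. rewrite Rabs_pos_eq in Hd by lra. lra. }
  assert (Ht2 : t <= 1 - 1 / (2 * p)).
  { specialize (Hd (z + 1)%Z). rewrite plus_IZR in Hd.
    replace (lam - (IZR z + 1)) with (t - 1) in Hd by (unfold t; ring).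
    rewrite Rabs_left1 in Hd by lra. lra. }
  replace (PI * lam) with (PI * t + IZR z * PI) by (unfold t; ring).
  rewrite abs_sin_shift.
  pose proof PI_RGT_0.
  assert (Hq : 1 / (2 * p) <= 1/4).
  { apply Rmult_le_reg_l with (2 * p); [lra|]. field_simplify; lra. }
  assert (HPI : PI / (2 * p) = PI * (1 / (2 * p))) by (field; lra).
  rewrite HPI.
  destruct (Rle_dec t (1/2)).
  - rewrite Rabs_pos_eq.
    + apply sin_incr_1; nra.
    + apply sin_ge_0; nra.
  - rewrite <- (sin_PI_x (PI * t)). rewrite Rabs_pos_eq.
    + apply sin_incr_1; nra.
    + apply sin_ge_0; nra.
Qed.

Lemma nat_above X : exists N : nat, X < INR N.
Proof.
  destruct (archimed X) as [H1 _].
  destruct (Z_lt_le_dec (up X) 0).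
  - exists 0%nat. simpl. apply Rlt_trans with (IZR (up X)); auto. apply IZR_lt; auto.
  - exists (Z.to_nat (up X)). rewrite INR_IZR_INZ, Z2Nat.id by auto. lra.
Qed.

Lemma countB u du ddu lam2 : UH u du ddu -> DSL_eigen_enum u lam2 ->
  forall B, exists N, forall n, (1 <= n)%nat -> lam2 n <= B -> (n < N)%nat.
Proof.
  intros HU [Hinc [Hev _]] B.
  set (Bd := Rabs (lam2 1%nat) + Rabs B).
  assert (HBd : 0 <= Bd) by (unfold Bd; pose proof (Rabs_pos (lam2 1%nat)); pose proof (Rabs_pos B); lra).
  destruct (sepB u du ddu HU Bd HBd) as [dl [Hdl Hsep]].
  assert (Hgap : forall j, (1 <= j)%nat -> - Bd <= lam2 j -> lam2 (S j) <= Bd -> dl <= lam2 (S j) - lam2 j).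
  { intros j Hj H1 H2.
    destruct (DSL_EF u du ddu _ HU (Hev j Hj)) as [p1 [dp1 [ddp1 [E1 N1]]]].
    destruct (DSL_EF u du ddu _ HU (Hev (S j) ltac:(lia))) as [p2 [dp2 [ddp2 [E2 N2]]]].
    eapply Hsep; eauto. }
  assert (Hl1 : - Bd <= lam2 1%nat).
  { unfold Bd. pose proof (Rabs_pos B). pose proof (Rle_abs (- lam2 1%nat)). rewrite Rabs_Ropp in H0. lra. }
  assert (HB : B <= Bd) by (unfold Bd; pose proof (Rle_abs B); pose proof (Rabs_pos (lam2 1%nat)); lra).
  assert (Hind : forall j, (1 <= j)%nat -> lam2 j <= B -> lam2 1%nat + INR (j - 1) * dl <= lam2 j).
  { induction j as [|j IH]; intros Hj HjB; [lia|].
    destruct (Nat.eq_dec j 0) as [->|Hj0].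
    - simpl. lra.
    - assert (Hlt := Hinc j ltac:(lia)).
      assert (IH' := IH ltac:(lia) ltac:(lra)).
      assert (0 <= INR (j - 1) * dl) by (apply Rmult_le_pos; [apply pos_INR|lra]).
      assert (Hg := Hgap j ltac:(lia) ltac:(lra) ltac:(lra)).
      replace (S j - 1)%nat with (S (j - 1)) by lia. rewrite S_INR. lra. }
  destruct (nat_above (1 + (B - lam2 1%nat) / dl)) as [N HN].
  exists N. intros n Hn HnB.
  assert (H := Hind n Hn HnB).
  apply INR_lt.
  assert (INR (n - 1) <= (B - lam2 1%nat) / dl).
  { apply Rmult_le_reg_r with dl; auto. unfold Rdiv. rewrite Rmult_assoc, Rinv_l by lra. lra. }
  replace n with (S (n - 1)) by lia. rewrite S_INR. lra.
Qed.

Lemma dist_odd p q m : (0 < p)%nat -> Nat.gcd p q = 1%nat -> Nat.Even p -> Nat.Odd m ->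
  forall z : Z, 1 / INR p <= Rabs (INR q / INR p * INR m - IZR z).
Proof.
  intros Hp Hg He Hm z.
  assert (Hq : Nat.Odd q).
  { destruct (Nat.Even_or_Odd q) as [Hq|Hq]; auto. exfalso.
    destruct He as [a Ha]. destruct Hq as [b Hb].
    assert (Nat.divide 2 (Nat.gcd p q)) by (apply Nat.gcd_greatest; [exists a|exists b]; lia).
    rewrite Hg in H. destruct H as [c Hc]. lia. }
  destruct He as [a Ha]. destruct Hq as [b Hb]. destruct Hm as [c Hc].
  assert (HpR : 0 < INR p) by (apply lt_0_INR; auto).
  replace (INR q / INR p * INR m - IZR z) with (IZR (Z.of_nat q * Z.of_nat m - z * Z.of_nat p) / INR p).
  2: { rewrite minus_IZR, !mult_IZR, <- !INR_IZR_INZ. field. lra. }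
  unfold Rdiv. rewrite Rabs_mult, (Rabs_pos_eq (/ INR p)) by (left; apply Rinv_0_lt_compat; auto).
  rewrite Rmult_1_l. rewrite <- (Rmult_1_l (/ INR p)) at 1. apply Rmult_le_compat_r.
  left; apply Rinv_0_lt_compat; auto.
  apply int_abs_ge1. subst. lia.
Qed.

Lemma row_eps (h : nat -> R) c Nb : exists eps, 0 < eps /\ eps <= 1 /\
  forall j, (j < Nb)%nat -> h j <> c -> eps <= Rabs (h j - c).
Proof.
  induction Nb as [|Nb [e [He1 [He2 He3]]]].
  - exists 1. split; [lra|split; [lra|]]. intros; lia.
  - destruct (Req_dec (h Nb) c) as [Heq|Hne].
    + exists e. split; auto. split; auto. intros j Hj Hn.
      destruct (Nat.eq_dec j Nb) as [->|]; [contradiction|]. apply He3; auto; lia.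
    + exists (Rmin e (Rabs (h Nb - c))). split; [apply Rmin_pos; auto; apply Rabs_pos_lt; lra|].
      split; [pose proof (Rmin_l e (Rabs (h Nb - c))); lra|].
      intros j Hj Hn. destruct (Nat.eq_dec j Nb) as [->|]; [apply Rmin_r|].
      eapply Rle_trans; [apply Rmin_l|]. apply He3; auto; lia.
Qed.

Lemma grid_eps (f : nat -> nat -> R) c Mb Nb : exists eps, 0 < eps /\ eps <= 1 /\
  forall i j, (i < Mb)%nat -> (j < Nb)%nat -> f i j <> c -> eps <= Rabs (f i j - c).
Proof.
  induction Mb as [|Mb [e [He1 [He2 He3]]]].
  - exists 1. split; [lra|split; [lra|]]. intros; lia.
  - destruct (row_eps (f Mb) c Nb) as [e' [H1 [H2 H3]]].
    exists (Rmin e e'). split; [apply Rmin_pos; auto|]. split; [pose proof (Rmin_l e e'); lra|].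
    intros i j Hi Hj Hn. destruct (Nat.eq_dec i Mb) as [->|].
    + eapply Rle_trans; [apply Rmin_r|]. apply H3; auto.
    + eapply Rle_trans; [apply Rmin_l|]. apply He3; auto; lia.
Qed.


Theorem proposition2p1 (u : R -> R) (lam2 : nat -> R) (p q : nat) :
  C2_closed u ->
  (forall x, 0 <= x <= PI -> 0 < u x) ->
  (0 < p)%nat -> (0 < q)%nat -> Nat.gcd p q = 1%nat ->
  DSL_eigen_enum u lam2 ->
  Nat.Even p ->
  forall m n, Nat.Odd m -> (1 <= n)%nat ->
    (exists eps, 0 < eps /\
       forall m' n', Nat.Odd m' -> (1 <= n')%nat ->
         Rabs (mu lam2 p q m' n' - mu lam2 p q m n) < eps ->
         mu lam2 p q m' n' = mu lam2 p q m n) /\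
    (exists N : nat,
       forall m' n', Nat.Odd m' -> (1 <= n')%nat ->
         mu lam2 p q m' n' = mu lam2 p q m n -> (m' < N)%nat /\ (n' < N)%nat).
Proof.
  intros HC2 Hpos Hp Hq Hg Henum Hev m n Hm Hn.
  destruct (UH_of_C2 u HC2 Hpos) as [du [ddu HU]].
  destruct (estA u du ddu HU) as [K HK].
  set (c := mu lam2 p q m n).
  set (pR := INR p).
  assert (Hp2 : 2 <= pR).
  { unfold pR. destruct Hev as [a Ha]. replace 2 with (INR 2) by (simpl; ring). apply le_INR. lia. }
  pose proof PI_RGT_0 as Hpi.
  set (sg := sin (PI / (2 * pR))).
  assert (Hsg : 0 < sg).
  { unfold sg. apply sin_gt_0. apply Rdiv_lt_0_compat; lra.
    apply Rmult_lt_reg_r with (2 * pR); [lra|]. unfold Rdiv. rewrite Rmult_assoc, Rinv_l by lra. nra. }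
  set (l1 := Rabs K / sg + 1).
  assert (Hl1 : 0 < l1) by (unfold l1; pose proof (Rabs_pos K); assert (0 <= Rabs K / sg) by (apply Rdiv_le_0_compat; lra); lra).
  set (R0 := l1 * l1 + (2 * pR * (Rabs c + 1)) * (2 * pR * (Rabs c + 1))).
  assert (Hkey : forall m' n', Nat.Odd m' -> (1 <= n')%nat -> Rabs (mu lam2 p q m' n' - c) < 1 ->
     lam2 n' < R0 /\ (INR q / pR * INR m') * (INR q / pR * INR m') < R0 + Rabs c + 1).
  { intros m' n' Hm' Hn' Hd.
    unfold mu in Hd. fold pR in Hd. fold c in Hd.
    set (s := INR q / pR * INR m') in *. set (L := lam2 n') in *.
    replace (s ^ 2) with (s * s) in Hd by (simpl; ring).
    assert (Hs : 0 <= s) by (unfold s; apply Rmult_le_pos; [apply Rdiv_le_0_compat; [apply pos_INR|lra]|apply pos_INR]).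
    assert (Habs : Rabs (L - s * s) < Rabs c + 1).
    { replace (L - s * s) with ((L - s * s - c) + c) by ring. eapply Rle_lt_trans; [apply Rabs_triang|]. lra. }
    assert (HLR : L < R0).
    { destruct (Rlt_le_dec L (l1 * l1)) as [Hlt|Hge].
      - unfold R0. pose proof (Rle_0_sqr (2 * pR * (Rabs c + 1))). unfold Rsqr in *. lra.
      - assert (HL0 : 0 < L) by nra.
        set (lam := sqrt L).
        assert (Hll : lam * lam = L) by (apply sqrt_sqrt; lra).
        assert (Hlam1 : l1 <= lam).
        { unfold lam. rewrite <- (sqrt_square l1) by lra. apply sqrt_le_1; nra. }
        assert (Hfar : 1 / (2 * pR) < Rabs (lam - s)).
        { destruct (Rlt_le_dec (1 / (2 * pR)) (Rabs (lam - s))) as [H|H]; auto. exfalso.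
          assert (Hsin : sg <= Rabs (sin (PI * lam))).
          { apply sin_far; auto. intros z.
            assert (Hz := dist_odd p q m' Hp Hg Hev Hm' z). fold pR s in Hz.
            replace (s - IZR z) with ((s - lam) + (lam - IZR z)) in Hz by ring.
            assert (Rabs (s - lam + (lam - IZR z)) <= Rabs (s - lam) + Rabs (lam - IZR z)) by apply Rabs_triang.
            rewrite Rabs_minus_sym in H0. lra. }
          destruct (DSL_EF u du ddu L HU (proj1 (proj2 Henum) n' Hn')) as [ph [dph [ddph [HE H1]]]].
          assert (HKL := HK L ph dph ddph HE HL0 ltac:(lra)). fold lam in HKL.
          rewrite Rmult_comm in Hsin.
          assert (sg * lam <= Rabs K).
          { apply Rle_trans with (Rabs (sin (lam * PI)) * lam). apply Rmult_le_compat_r; lra.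
            apply Rle_trans with K; auto. apply Rle_abs. }
          assert (lam <= Rabs K / sg).
          { apply Rmult_le_reg_l with sg; auto. replace (sg * (Rabs K / sg)) with (Rabs K) by (field; lra). lra. }
          unfold l1 in Hlam1. lra. }
        assert (Hprod : Rabs (L - s * s) = Rabs (lam - s) * (lam + s)).
        { rewrite <- Hll. replace (lam * lam - s * s) with ((lam - s) * (lam + s)) by ring.
          rewrite Rabs_mult, (Rabs_pos_eq (lam + s)) by lra. reflexivity. }
        assert (1 / (2 * pR) * lam < Rabs c + 1).
        { apply Rle_lt_trans with (Rabs (L - s * s)); auto. rewrite Hprod.
          apply Rle_trans with (Rabs (lam - s) * lam). apply Rmult_le_compat_r; lra.
          apply Rmult_le_compat_l; [apply Rabs_pos|lra]. }
        assert (Hlb : lam < 2 * pR * (Rabs c + 1)).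
        { apply Rmult_lt_reg_l with (1 / (2 * pR)). apply Rdiv_lt_0_compat; lra.
          replace (1 / (2 * pR) * (2 * pR * (Rabs c + 1))) with (Rabs c + 1) by (field; lra). lra. }
        rewrite <- Hll. unfold R0. pose proof (Rle_0_sqr l1). unfold Rsqr in *. nra. }
    split; auto.
    pose proof (Rabs_maj2 (L - s * s)). lra. }
  destruct (nat_above (pR * pR * (R0 + Rabs c + 1))) as [Mb HMb].
  destruct (countB u du ddu lam2 HU Henum R0) as [Nb HNb].
  assert (Hbd : forall m' n', Nat.Odd m' -> (1 <= n')%nat -> Rabs (mu lam2 p q m' n' - c) < 1 ->
     (m' < Mb)%nat /\ (n' < Nb)%nat).
  { intros m' n' Hm' Hn' Hd. destruct (Hkey m' n' Hm' Hn' Hd) as [H1 H2]. split.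
    - apply INR_lt.
      set (s := INR q / pR * INR m') in *.
      assert (Hq1 : 1 <= INR q) by (replace 1 with (INR 1) by reflexivity; apply le_INR; lia).
      assert (Hm1 : 1 <= INR m') by (replace 1 with (INR 1) by reflexivity; apply le_INR; destruct Hm'; lia).
      assert (Hps : pR * s = INR q * INR m') by (unfold s; field; lra).
      assert (INR m' <= pR * s) by (rewrite Hps; nra).
      assert (INR m' * INR m' <= (pR * s) * (pR * s)) by nra.
      assert ((pR * s) * (pR * s) = pR * pR * (s * s)) by ring.
      assert (pR * pR * (s * s) <= pR * pR * (R0 + Rabs c + 1)) by (apply Rmult_le_compat_l; nra).
      nra.
    - apply HNb; auto. lra. }
  split.
  - destruct (grid_eps (fun i j => mu lam2 p q i j) c Mb Nb) as [eps [He1 [He2 He3]]].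
    exists eps. split; auto. intros m' n' Hm' Hn' Hd. fold c in Hd |- *.
    destruct (Hbd m' n' Hm' Hn' ltac:(lra)) as [HM HN].
    destruct (Req_dec (mu lam2 p q m' n') c) as [Heq|Hne]; auto.
    specialize (He3 m' n' HM HN Hne). simpl in He3. lra.
  - exists (Mb + Nb)%nat. intros m' n' Hm' Hn' Heq. fold c in Heq.
    assert (Rabs (mu lam2 p q m' n' - c) < 1) by (rewrite Heq, Rminus_eq_0, Rabs_R0; lra).
    destruct (Hbd m' n' Hm' Hn' H) as [HM HN]. lia.
Qed.
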